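(* Let $X$ be a finite $n$-dimensional simplicial complex and $0\le k\le n-1$. There exists a $k$-cone function (with some apex) if and only if $\widetilde H_j(X)=\widetilde H^j(X)=0$ for every $0\le j\le k$.
   Context: $X(-1)=\{\emptyset\}$. Over $\mathbb{F}_2$: $C_j(X)$ has basis $X(j)$, $\partial_j\sigma=\sum_{\tau\subset\sigma,|\tau|=|\sigma|-1}\tau$ (so $\partial_0\{u\}=\emptyset$); $\widetilde H_j(X)=\ker\partial_j/\operatorname{Im}\partial_{j+1}$, and $\widetilde H^j(X)$ is the corresponding (reduced) cohomology with $\mathbb{F}_2$ coefficients. Cone function: a $(-1)$-cone function with apex $v$ maps $\emptyset\mapsto\{v\}$; for $k\ge0$, a $k$-cone function with apex $v$ is a linear map $\operatorname{Cone}^v_k:\bigoplus_{j=-1}^kC_j\to\bigoplus_{j=-1}^kC_{j+1}$ (sending $C_j$ into $C_{j+1}$) whose restriction to $\bigoplus_{j=-1}^{k-1}C_j$ is a $(k-1)$-cone function with apex $v$, and with $\partial_{k+1}\operatorname{Cone}^v_k(A)=A+\operatorname{Cone}^v_k(\partial_kA)$ for all $A\in C_k$. *)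

(* Defs.v *)
From mathcomp Require Import all_boot all_algebra.
Set Implicit Arguments. Unset Strict Implicit. Unset Printing Implicit Defensive.
Import GRing.Theory.
Local Open Scope ring_scope.

(* A finite abstract simplicial complex on the finite vertex type V:
   a downward-closed family of finite sets, containing the empty face
   (so X(-1) = {emptyset}). *)
Definition simplicial_complex (V : finType) (X : {set {set V}}) : Prop :=
  set0 \in X /\ forall s t : {set V}, s \in X -> t \subset s -> t \in X.

Definition has_dim (V : finType) (X : {set {set V}}) (n : nat) : Prop :=
  (exists2 s, s \in X & #|s| = n.+1) /\ (forall s, s \in X -> (#|s| <= n.+1)%N).

Definition chain (V : finType) := {ffun {set V} -> 'F_2}.

Definition chain1 (V : finType) (s : {set V}) : chain V :=
  [ffun t : {set V} => (t == s)%:R].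

(* c lies in the span of the faces of X with exactly m vertices,
   i.e. in C_{m-1}(X)  (m = 0 gives C_{-1}(X) = span{emptyset}). *)
Definition Cc (V : finType) (X : {set {set V}}) (m : nat) (c : chain V) : Prop :=
  forall s, c s != 0 -> s \in X /\ #|s| = m.

(* Boundary: the linear extension of
   d(sigma) = sum of the codimension-1 subsets tau of sigma
   (so d{u} = emptyset and d(emptyset) = 0). *)
Definition bd (V : finType) (c : chain V) : chain V :=
  [ffun t : {set V} => \sum_(s : {set V} | (t \subset s) && (#|s| == #|t|.+1)) c s].

Definition additive_map (A B : zmodType) (f : A -> B) : Prop :=
  forall a b, f (a + b) = f a + f b.

(* k-cone function with apex v (unfolding the recursive definition):
   an F_2-linear map F on chains, sending C_j(X) into C_{j+1}(X) for
   -1 <= j <= k, with F(emptyset) = {v}, and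
   d F(A) = A + F(d A) for all A in C_j(X), 0 <= j <= k. *)
Definition cone_function (V : finType) (X : {set {set V}}) (k : nat) (v : V)
    (F : chain V -> chain V) : Prop :=
  [/\ additive_map F,
      (forall m, (m <= k.+1)%N -> forall A, Cc X m A -> Cc X m.+1 (F A)),
      F (chain1 set0) = chain1 [set v] &
      (forall j, (j <= k)%N -> forall A, Cc X j.+1 A ->
           bd (F A) = A + F (bd A))].

Definition homology_vanishes (V : finType) (X : {set {set V}}) (j : nat) : Prop :=
  forall c, Cc X j.+1 c -> bd c = 0 -> exists2 b, Cc X j.+2 b & bd b = c.

(* Cochains are given by
   F_2-linear maps on all chains; only their restriction matters. *)
Definition cohomology_vanishes (V : finType) (X : {set {set V}}) (j : nat) : Prop :=
  forall phi : chain V -> 'F_2, additive_map phi ->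
    (forall b, Cc X j.+2 b -> phi (bd b) = 0) ->
    exists2 psi : chain V -> 'F_2, additive_map psi &
      forall a, Cc X j.+1 a -> phi a = psi (bd a).

(* Main.v *)
Require Import Defs.
From mathcomp Require Import all_boot all_algebra zify.
From Stdlib Require Import IndefiniteDescription.
Set Implicit Arguments. Unset Strict Implicit. Unset Printing Implicit Defensive.
Import GRing.Theory.
Local Open Scope ring_scope.

Section Aux.
Variable V : finType.
Implicit Types (c d : chain V) (s t u : {set V}).

Lemma F2_double (x : 'F_2) : x + x = 0.
Proof. by rewrite -mulr2n -mulr_natr (@pchar_Fp_0 2) // mulr0. Qed.

Lemma chain_double c : c + c = 0.
Proof. by apply/ffunP=> t; rewrite !ffunE F2_double. Qed.

Definition Lin (h : {set V} -> chain V) c : chain V :=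
  [ffun t => \sum_s c s * h s t].

Lemma LinD h c d : Lin h (c + d) = Lin h c + Lin h d.
Proof.
apply/ffunP=> t; rewrite !ffunE -big_split /=.
by apply: eq_bigr => s _; rewrite ffunE mulrDl.
Qed.

Lemma Lin0 h : Lin h 0 = 0.
Proof. by apply/ffunP=> t; rewrite !ffunE big1 // => s _; rewrite ffunE mul0r. Qed.

Lemma LinhD h1 h2 c : Lin (fun s => h1 s + h2 s) c = Lin h1 c + Lin h2 c.
Proof.
apply/ffunP=> t; rewrite !ffunE -big_split /=.
by apply: eq_bigr => s _; rewrite ffunE mulrDr.
Qed.

Lemma Lin1 h s : Lin h (chain1 s) = h s.
Proof.
apply/ffunP=> t; rewrite ffunE (bigD1 s) //= ffunE eqxx mul1r big1 ?addr0 //.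
by move=> u /negbTE Hu; rewrite ffunE Hu mul0r.
Qed.

Lemma Lin_chain1 c : Lin (@chain1 V) c = c.
Proof.
apply/ffunP=> t; rewrite ffunE (bigD1 t) //= ffunE eqxx mulr1 big1 ?addr0 //.
by move=> u /negbTE Hu; rewrite ffunE eq_sym Hu mulr0.
Qed.

Lemma Lin_comp h g c : Lin h (Lin g c) = Lin (fun s => Lin h (g s)) c.
Proof.
apply/ffunP=> t; rewrite !ffunE.
under eq_bigr do rewrite ffunE mulr_suml.
rewrite exchange_big /=; apply: eq_bigr => s _.
by rewrite ffunE mulr_sumr; apply: eq_bigr => u _; rewrite mulrA.
Qed.

Lemma Lin_eq h1 h2 c : (forall s, c s != 0 -> h1 s = h2 s) -> Lin h1 c = Lin h2 c.
Proof.
move=> H; apply/ffunP=> t; rewrite !ffunE; apply: eq_bigr => s _.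
by case: (eqVneq (c s) 0) => [->|/H ->]; rewrite ?mul0r.
Qed.

Lemma Lin_nz h c t : Lin h c t != 0 -> exists2 s, c s != 0 & h s t != 0.
Proof.
rewrite ffunE => H.
case: (pickP (fun s => (c s != 0) && (h s t != 0))) => [s /andP[H1 H2]|H0].
  by exists s.
move: H; rewrite big1 ?eqxx // => s _; move: (H0 s) => /negbT.
rewrite negb_and !negbK.
by case/orP => /eqP ->; rewrite ?mul0r ?mulr0.
Qed.

Lemma bdD c d : bd (c + d) = bd c + bd d.
Proof.
apply/ffunP=> t; rewrite !ffunE -big_split /=.
by apply: eq_bigr => s _; rewrite ffunE.
Qed.

Lemma bd0 : bd (0 : chain V) = 0.
Proof. by apply/ffunP=> t; rewrite !ffunE big1 // => s _; rewrite ffunE. Qed.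

Lemma bd1E s t : bd (chain1 s) t = ((t \subset s) && (#|s| == #|t|.+1))%:R.
Proof.
rewrite ffunE; case Ps: ((t \subset s) && (#|s| == #|t|.+1)).
  rewrite (bigD1 s) //= ffunE eqxx big1 ?addr0 //.
  by move=> u /andP[_ /negbTE Hu]; rewrite ffunE Hu.
rewrite big1 // => u Pu; rewrite ffunE; case: eqP => // Eu.
by subst u; rewrite Pu in Ps.
Qed.

Lemma bdLin h c : bd (Lin h c) = Lin (fun s => bd (h s)) c.
Proof.
apply/ffunP=> t; rewrite !ffunE.
under eq_bigr do rewrite ffunE.
rewrite exchange_big /=; apply: eq_bigr => s _.
by rewrite ffunE mulr_sumr.
Qed.

Lemma bd_Lin c : bd c = Lin (fun s => bd (chain1 s)) c.
Proof. by rewrite -bdLin Lin_chain1. Qed.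

End Aux.

Section Aux2.
Variable V : finType.
Implicit Types (c d : chain V) (s t u : {set V}).

Lemma one_more t u : t \subset u -> #|u| = #|t|.+1 ->
  exists2 x, x \notin t & u = x |: t.
Proof.
move=> H Hc.
have : #|u :\: t| == 1%N by rewrite cardsD (setIidPr H) Hc subSnn.
case/cards1P => x Ex.
have : x \in u :\: t by rewrite Ex set11.
rewrite in_setD => /andP[xt xu]; exists x => //.
apply/setP => y; rewrite in_setU1.
case: (eqVneq y x) => [->|nyx] //=.
have E : (y \in u :\: t) = (y \in [set x]) by rewrite Ex.
move: E.
rewrite in_setD in_set1 (negbTE nyx).
case yt: (y \in t) => /=; first by rewrite (subsetP H).
by [].
Qed.

Lemma bdbd1 s : bd (bd (chain1 s)) = 0.
Proof.
apply/ffunP => t; rewrite [RHS]ffunE ffunE.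
under eq_bigr do rewrite bd1E.
case H: ((t \subset s) && (#|s| == #|t|.+2)); last first.
  rewrite big1 // => u /andP[tu /eqP cu].
  case Hb: ((u \subset s) && _) => //; move/andP: Hb => [us /eqP cs].
  by move: H; rewrite (subset_trans tu us) cs cu eqxx.
move/andP: H => [ts /eqP cs].
have : #|s :\: t| == 2%N by rewrite cardsD (setIidPr ts) cs; apply/eqP; lia.
case/cards2P => a [b [ab Est]].
have : a \in s :\: t by rewrite Est !inE eqxx.
rewrite in_setD => /andP[at_ as_].
have : b \in s :\: t by rewrite Est !inE eqxx orbT.
rewrite in_setD => /andP[bt bs].
have cua : #|a |: t| = #|t|.+1 by rewrite cardsU1 at_.
have cub : #|b |: t| = #|t|.+1 by rewrite cardsU1 bt.
have nab : a |: t != b |: t.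
  apply/negP => /eqP E; have := setU11 a t; rewrite E in_setU1 (negbTE ab) /=.
  by rewrite (negbTE at_).
rewrite (bigD1 (a |: t)) /=; last by rewrite subsetUr cua eqxx.
rewrite (bigD1 (b |: t)) /=; last by rewrite subsetUr cub eqxx eq_sym nab.
rewrite big1.
  rewrite !subUset !sub1set as_ bs ts cua cub cs eqxx /=.
  by rewrite addr0 F2_double.
move=> u /andP[/andP[/andP[tu /eqP cu] nua] nub].
case Hb: ((u \subset s) && _) => //; move/andP: Hb => [us _].
have [x xt Eu] := one_more tu cu.
have : x \in s :\: t by rewrite in_setD xt (subsetP us) // Eu setU11.
rewrite Est !inE => /orP[] /eqP Ex.
  by move: nua; rewrite Eu Ex eqxx.
by move: nub; rewrite Eu Ex eqxx.
Qed.

Lemma bdbd c : bd (bd c) = 0.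
Proof.
rewrite [bd c]bd_Lin bdLin.
rewrite (@Lin_eq _ _ (fun _ => 0)); last by move=> s _; rewrite bdbd1.
by apply/ffunP=> t; rewrite !ffunE big1 // => s _; rewrite ?ffunE mulr0.
Qed.

End Aux2.

Section Build.
Variable V : finType.
Variable X : {set {set V}}.
Implicit Types (c d : chain V) (s t u : {set V}).

Lemma cone_eq h c :
  (forall s, c s != 0 -> bd (h s) = chain1 s + Lin h (bd (chain1 s))) ->
  bd (Lin h c) = c + Lin h (bd c).
Proof.
move=> H; rewrite bdLin (Lin_eq H).
rewrite (@LinhD _ (@chain1 V) (fun s => Lin h (bd (chain1 s)))) Lin_chain1.
by rewrite [bd c]bd_Lin Lin_comp.
Qed.

Lemma CcLin m h c : (forall s, c s != 0 -> Cc X m (h s)) -> Cc X m (Lin h c).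
Proof. by move=> H t /Lin_nz [s /H Hs /Hs]. Qed.

Lemma CcD m c d : Cc X m c -> Cc X m d -> Cc X m (c + d).
Proof.
move=> Hc Hd t; rewrite ffunE; case: (eqVneq (c t) 0) => [->|/Hc //].
by rewrite add0r => /Hd.
Qed.

Lemma Cc_chain1 s : s \in X -> Cc X #|s| (chain1 s).
Proof.
move=> sX t; rewrite ffunE; case: (eqVneq t s) => [-> //|_].
by rewrite eqxx.
Qed.

Lemma bd1_nz s t : bd (chain1 s) t != 0 -> t \subset s /\ #|s| = #|t|.+1.
Proof.
rewrite bd1E; case: andP => [[? /eqP ?] //|_]; by rewrite eqxx.
Qed.

Hypothesis HX : simplicial_complex X.
Variable v : V.
Hypothesis vX : [set v] \in X.

Definition good h m :=
  [/\ h set0 = chain1 [set v],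
      (forall s, s \in X -> (#|s| <= m)%N -> Cc X #|s|.+1 (h s)) &
      (forall s, s \in X -> (#|s| <= m)%N ->
          bd (h s) = chain1 s + Lin h (bd (chain1 s)))].

Lemma bd_chain1_set0 : bd (chain1 (set0 : {set V})) = 0.
Proof. by apply/ffunP=> t; rewrite bd1E cards0 ffunE andbF. Qed.

Lemma bd_chain1_v : bd (chain1 [set v]) = chain1 set0.
Proof.
apply/ffunP=> t; rewrite bd1E ffunE cards1 eqSS eq_sym cards_eq0.
by case: eqP => [->|]; rewrite ?sub0set ?andbF.
Qed.

Lemma build m : (forall j, (j < m)%N -> homology_vanishes X j) ->
  exists h, good h m.
Proof.
case: HX => X0 Xdown.
elim: m => [|m IH] Hhom.
  exists (fun s => if s == set0 then chain1 [set v] else 0); split.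
  - by rewrite eqxx.
  - move=> s sX; rewrite leqn0 cards_eq0 => /eqP ->; rewrite eqxx cards0.
    move=> t; rewrite ffunE; case: (eqVneq t [set v]) => [-> _|_].
      by rewrite cards1.
    by rewrite eqxx.
  - move=> s sX; rewrite leqn0 cards_eq0 => /eqP ->; rewrite eqxx.
    by rewrite bd_chain1_set0 Lin0 addr0 bd_chain1_v.
have [h [G0 Ga Gc]] : exists h, good h m.
  by apply: IH => j jm; apply: Hhom; apply: ltnW.
have Hm := Hhom m (ltnSn m).
pose z s := chain1 s + Lin h (bd (chain1 s)).
have Hz : forall s, s \in X -> #|s| = m.+1 -> Cc X m.+1 (z s) /\ bd (z s) = 0.
  move=> s sX cs; split.
    apply: CcD; first by rewrite -cs; apply: Cc_chain1.
    apply: CcLin => t /bd1_nz [ts ct].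
    have tX : t \in X by apply: Xdown ts.
    have -> : m = #|t| by move: cs; rewrite ct => [[]].
    by apply: Ga => //; move: cs; rewrite ct => [[->]].
  rewrite /z bdD cone_eq; last first.
    move=> t /bd1_nz [ts ct]; apply: Gc; first by apply: Xdown ts.
    by move: cs; rewrite ct => [[->]].
  by rewrite bdbd Lin0 addr0 chain_double.
have : forall s, exists b, s \in X -> #|s| = m.+1 ->
    Cc X m.+2 b /\ bd b = z s.
  move=> s; case: (boolP ((s \in X) && (#|s| == m.+1))).
    case/andP=> sX /eqP cs; have [Hc Hb] := Hz s sX cs.
    by have [b Hb1 Hb2] := Hm _ Hc Hb; exists b.
  by move=> H; exists 0 => sX /eqP cs; move: H; rewrite sX cs.
case/functional_choice => g Hg.
pose h' s := if #|s| == m.+1 then g s else h s.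
have Lh : forall c, (forall t, c t != 0 -> (#|t| <= m)%N) -> Lin h' c = Lin h c.
  move=> c Hc; apply: Lin_eq => t /Hc tm.
  by rewrite /h'; case: eqP => // ct; move: tm; rewrite ct ltnn.
have Lhs : forall s, (#|s| <= m.+1)%N -> Lin h' (bd (chain1 s)) = Lin h (bd (chain1 s)).
  by move=> s sm; apply: Lh => t /bd1_nz [_ ct]; move: sm; rewrite ct ltnS.
exists h'; split.
- by rewrite /h' cards0 G0.
- move=> s sX sm; rewrite /h'; case: eqP => [cs|ncs].
    by rewrite cs; case: (Hg s sX cs).
  by apply: Ga => //; move: sm ncs; rewrite leq_eqVlt ltnS => /orP[/eqP|].
- move=> s sX sm; rewrite Lhs // /h'; case: eqP => [cs|ncs].
    by case: (Hg s sX cs).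
  by apply: Gc => //; move: sm ncs; rewrite leq_eqVlt ltnS => /orP[/eqP|].
Qed.

End Build.

Local Close Scope ring_scope.

Lemma F2_eq (x y : 'F_2) : (0 = x + y)%R -> x = y.
Proof.
move=> H; by rewrite -[y]add0r -(F2_double x) -addrA -H addr0.
Qed.

Theorem propositionA1 (V : finType) (X : {set {set V}}) (n k : nat) :
  simplicial_complex X -> has_dim X n -> (k <= n.-1)%N -> (0 < n)%N ->
  (exists (v : V) (F : chain V -> chain V), cone_function X k v F) <->
  (forall j : nat, (j <= k)%N -> homology_vanishes X j /\ cohomology_vanishes X j).
Proof.
move=> HX [[s0 s0X cs0] _] _ _; split.
  move=> [v [F [Fadd FCc F0 Fbd]]] j jk.
  have F00 : F 0%R = 0%R.
    have := Fadd 0%R 0%R; rewrite addr0 => E.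
    by apply: (addrI (F 0%R)); rewrite -E addr0.
  split.
    move=> c Hc Hb; exists (F c); first by apply: FCc => //; rewrite ltnS.
    by rewrite (Fbd j jk c Hc) Hb F00 addr0.
  move=> phi phiadd Hphi; exists (fun a => phi (F a)).
    by move=> a b; rewrite Fadd phiadd.
  move=> a Ha; apply: F2_eq.
  rewrite -phiadd -(Fbd j jk a Ha) Hphi //; apply: FCc => //.
move=> H.
have : (0 < #|s0|)%N by rewrite cs0.
rewrite card_gt0 => /set0Pn [v vs0].
have vX : [set v] \in X by case: HX => _ D; apply: D s0X _; rewrite sub1set.
have [h [G0 Ga Gc]] := build HX vX (m := k.+1)
  (fun j jk => proj1 (H j (jk : (j < k.+1)%N))).
exists v, (Lin h); split.
- exact: LinD.
- move=> m mk A HA; apply: CcLin => s /HA [sX cs].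
  by rewrite -cs; apply: Ga => //; rewrite cs.
- by rewrite Lin1.
- move=> j jk A HA; apply: cone_eq => s /HA [sX cs].
  by apply: Gc => //; rewrite cs.
Qed.
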